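(* Let $X$ be a topological space. Then $X$ is core-compact if and only if its symmetric pseudogroup $\mathscr{I}(X)$ is continuous.
   Context: The symmetric pseudogroup $\mathscr{I}(X)$ is the set of all homeomorphisms $f:U\to V$ between open subsets $U=\mathrm{dom}(f)$ and $V$ of $X$, with product: for $f:U\to V$ and $f_1:U_1\to V_1$, $f_1\cdot f : x\mapsto f_1(f(x))$ defined on $f^{-1}(V\cap U_1)$ with values in $f_1(V\cap U_1)$; it is an inverse semigroup with $f^*=f^{-1}$. Its intrinsic order is $f\leqslant g$ iff $f=g|_U$ for some open $U\subseteq\mathrm{dom}(g)$. In a poset, $x$ is way-below $y$ ($x\ll y$) if for every directed subset $D$ (nonempty, any two elements having an upper bound in $D$) that has a supremum with $y\leqslant\sup D$, there is $d\in D$ with $x\leqslant d$. A poset is continuous if for every $s$ the set $\{t: t\ll s\}$ is directed with supremum $s$; $\mathscr{I}(X)$ is continuous if it is so for its intrinsic order. $X$ is core-compact if the collection of closed subsets of $X$, ordered by reverse inclusion $\supseteq$, is a continuous poset. *)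

(* Defs.v *)
From mathcomp Require Import all_boot all_order.
From mathcomp Require Import all_classical topology.
Set Implicit Arguments. Unset Strict Implicit. Unset Printing Implicit Defensive.
Local Open Scope classical_set_scope.

Section PosetNotions.
Variables (T : Type) (le : T -> T -> Prop).

Definition directed (D : set T) : Prop :=
  (exists d, D d) /\
  (forall a b, D a -> D b -> exists c, D c /\ le a c /\ le b c).

Definition is_sup (D : set T) (s : T) : Prop :=
  (forall d, D d -> le d s) /\ (forall u, (forall d, D d -> le d u) -> le s u).

Definition way_below (x y : T) : Prop :=
  forall D s, directed D -> is_sup D s -> le y s -> exists d, D d /\ le x d.

Definition continuous_poset : Prop :=
  forall s, directed (fun t => way_below t s) /\ is_sup (fun t => way_below t s) s.
End PosetNotions.

Section Pseudogroup.
Variable X : topologicalType.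

Record closed_set := ClosedSet { cs_set :> set X; cs_closed : closed cs_set }.

Definition closed_le (A B : closed_set) : Prop := (B : set X) `<=` A.

Definition core_compact : Prop := continuous_poset closed_le.

(* ---------- the symmetric pseudogroup I(X) ----------
   A homeomorphism f : U -> V between open subsets U, V of X is encoded
   by its graph, as a partial map X -> option X with domain U. *)
Definition pdom (f : X -> option X) : set X := [set x | f x <> None].
Definition pran (f : X -> option X) : set X := [set y | exists x, f x = Some y].
Definition ppre (f : X -> option X) (W : set X) : set X :=
  [set x | exists y, f x = Some y /\ W y].
Definition pimg (f : X -> option X) (W : set X) : set X :=
  [set y | exists x, f x = Some y /\ W x].

(* f : dom f -> ran f is a homeomorphism between open subsets of X:
   domain and range are open, f is injective (hence bijective onto its
   range), f is continuous (preimages of open sets are open; since dom f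
   is open this is continuity for the subspace topologies), and f^{-1} is
   continuous (images of open sets are open). *)
Definition is_phomeo (f : X -> option X) : Prop :=
  [/\ open (pdom f), open (pran f),
      (forall x1 x2 y, f x1 = Some y -> f x2 = Some y -> x1 = x2),
      (forall W, open W -> open (ppre f W)) &
      (forall W, open W -> open (pimg f W))].

Record pI := PI { pfun :> X -> option X; pfunP : is_phomeo pfun }.

Definition pI_le (f g : pI) : Prop :=
  exists U : set X, [/\ open U, U `<=` pdom g &
    forall x, (U x -> f x = g x) /\ (~ U x -> f x = None)].

Definition pI_continuous : Prop := continuous_poset pI_le.
End Pseudogroup.

(* Main.v *)
Require Import Defs.
From mathcomp Require Import all_boot all_order.
From mathcomp Require Import all_classical topology.
Set Implicit Arguments. Unset Strict Implicit. Unset Printing Implicit Defensive.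
Local Open Scope classical_set_scope.

Section Aux.
Variable X : topologicalType.

Definition rfun (s : X -> option X) (U : set X) : X -> option X :=
  fun x => if `[< U x >] then s x else None.

Lemma rfunE s U x y : rfun s U x = Some y <-> U x /\ s x = Some y.
Proof.
rewrite /rfun; case: (asboolP (U x)) => Ux; first by split=> // [[]].
by split=> // [[]].
Qed.

Lemma rfun_phomeo (s : pI X) (U : set X) : open U -> is_phomeo (rfun s U).
Proof.
move=> oU; have [od orr inj pre img] := pfunP s.
have E1 : pdom (rfun s U) = U `&` pdom s.
  apply/seteqP; split=> x /=.
    rewrite /pdom /= /rfun; case: (asboolP (U x)) => //.
  rewrite /pdom /= /rfun => -[Ux]; by case: (asboolP (U x)).
have E2 : pran (rfun s U) = pimg s U.
  apply/seteqP; split=> y /= [x]; rewrite ?rfunE.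
    by move=> [Ux sx]; exists x.
  by move=> [sx Ux]; exists x; apply/rfunE.
have E3 : forall W, ppre (rfun s U) W = U `&` ppre s W.
  move=> W; apply/seteqP; split=> x /=.
    by move=> [y [/rfunE [Ux sx] Wy]]; split=> //; exists y.
  by move=> [Ux [y [sx Wy]]]; exists y; split=> //; apply/rfunE.
have E4 : forall W, pimg (rfun s U) W = pimg s (U `&` W).
  move=> W; apply/seteqP; split=> y /=.
    by move=> [x [/rfunE [Ux sx] Wx]]; exists x.
  by move=> [x [sx [Ux Wx]]]; exists x; split=> //; apply/rfunE.
split.
- by rewrite E1; apply: openI.
- by rewrite E2; apply: img.
- by move=> x1 x2 y /rfunE [_ h1] /rfunE [_ h2]; apply: (inj x1 x2 y).
- by move=> W oW; rewrite E3; apply: openI => //; apply: pre.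
- by move=> W oW; rewrite E4; apply: img; apply: openI.
Qed.

Definition restr (s : pI X) (U : set X) (oU : open U) : pI X :=
  PI (rfun_phomeo s oU).

Lemma id_phomeo : is_phomeo (fun x : X => Some x).
Proof.
have E : forall W : set X, ppre (fun x => Some x) W = W.
  by move=> W; apply/seteqP; split=> x /=; [move=> [y [[<-]]]|exists x].
have E' : forall W : set X, pimg (fun x => Some x) W = W.
  by move=> W; apply/seteqP; split=> x /=; [move=> [y [[<-]]]|exists x].
split.
- rewrite (_ : pdom _ = setT); first exact: openT.
  by apply/seteqP; split.
- rewrite (_ : pran _ = setT); first exact: openT.
  by apply/seteqP; split=> // x _; exists x.
- by move=> x1 x2 y [->] [->].
- by move=> W; rewrite E.
- by move=> W; rewrite E'.
Qed.

Definition idI : pI X := PI id_phomeo.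

Lemma leP (f g : pI X) : pI_le f g <-> (forall x y, f x = Some y -> g x = Some y).
Proof.
split.
  move=> [U [oU sU h]] x y fx.
  have [Ux|nUx] := pselect (U x); first by rewrite -(h x).1.
  by rewrite (h x).2 in fx.
move=> h; exists (pdom f); split; first by case: (pfunP f).
  by move=> x; rewrite /pdom /=; case E: (f x) => [y|] // _; rewrite (h _ _ E).
move=> x; split.
  by rewrite /pdom /=; case E: (f x) => [y|] // _; rewrite (h _ _ E).
by rewrite /pdom /=; case: (f x) => // y; move=> /(_ ltac:(by [])).
Qed.


Lemma wb_le T (le : T -> T -> Prop) x y :
  (forall a, le a a) -> way_below le x y -> le x y.
Proof.
move=> refl wb.
have dD : directed le (fun z => z = y).
  split; first by exists y.
  by move=> a b -> ->; exists y.
have sD : is_sup le (fun z => z = y) y.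
  by split=> [d ->|u /(_ y erefl)].
by have [d [-> //]] := wb _ _ dD sD (refl y).
Qed.

Definition CondC := forall (B : closed_set X) x, ~ cs_set B x ->
  exists A, way_below (@closed_le X) A B /\ ~ cs_set A x.

Definition CondI := forall (s : pI X) x, s x <> None ->
  exists f, way_below (@pI_le X) f s /\ f x <> None.

Lemma cc_iff : core_compact X <-> CondC.
Proof.
split.
  move=> cc B x nBx; apply: contrapT => H.
  have cI : closed (\bigcap_(A in fun A => way_below (@closed_le X) A B) cs_set A).
    by apply: closed_bigI => A _; apply: cs_closed.
  pose I := ClosedSet cI.
  have ub : forall A, way_below (@closed_le X) A B -> closed_le A I.
    by move=> A wA z Iz; apply: Iz.
  apply: nBx; apply: ((cc B).2.2 I ub).
  move=> A wA; apply: contrapT => nAx; apply: H; by exists A.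
move=> h B; split; first split.
- exists (ClosedSet (@closedT X)) => D s [[d Dd] _] _ _; exists d; split=> //.
- move=> A1 A2 w1 w2.
  have cI : closed (cs_set A1 `&` cs_set A2).
    by apply: closedI; apply: cs_closed.
  exists (ClosedSet cI); split; last first.
    by split=> z [].
  move=> D s dD sup leBs.
  have [d1 [D1 l1]] := w1 D s dD sup leBs.
  have [d2 [D2 l2]] := w2 D s dD sup leBs.
  have [c [Dc [l1' l2']]] := dD.2 d1 d2 D1 D2.
  exists c; split=> // z cz; split; [apply: l1; apply: l1' | apply: l2; apply: l2'] => //.
- split.
    by move=> A wA; apply: wb_le wA => a.
  move=> u ub z uz; apply: contrapT => nBz.
  have [A [wA nAz]] := h B z nBz; exact: nAz (ub A wA z uz).
Qed.

Lemma pI_refl (f : pI X) : pI_le f f.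
Proof. by apply/leP. Qed.

Lemma ci_iff : pI_continuous X <-> CondI.
Proof.
split.
  move=> pc s x sx.
  pose W := fun f => way_below (@pI_le X) f s.
  have oU : open (\bigcup_(f in W) pdom f).
    by apply: bigcup_open => f _; case: (pfunP f).
  pose u := restr s oU.
  have ub : forall f, W f -> pI_le f u.
    move=> f wf; apply/leP => z y fz; apply/rfunE; split.
      by exists f => //; rewrite /pdom /= fz.
    by move/leP: (wb_le pI_refl wf); apply.
  have := (pc s).2.2 u ub; move/leP.
  case E: (s x) => [y|] //; move/(_ x y E)/rfunE => [[f wf fx] _].
  by exists f.
move=> h s; split; first split.
- exists (restr s open0) => D t [[d Dd] _] _ _; exists d; split=> //.
  by apply/leP => z y /rfunE [].
- move=> f1 f2 w1 w2.
  have oU : open (pdom f1 `|` pdom f2).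
    by apply: openU; [case: (pfunP f1)|case: (pfunP f2)].
  have l1s := wb_le pI_refl w1; have l2s := wb_le pI_refl w2.
  exists (restr s oU); split; last split.
  + move=> D t dD sup les.
    have [d1 [D1 l1]] := w1 D t dD sup les.
    have [d2 [D2 l2]] := w2 D t dD sup les.
    have [c [Dc [l1' l2']]] := dD.2 d1 d2 D1 D2.
    exists c; split=> //; apply/leP => z y /rfunE [[Uz|Uz] sz].
      case E: (f1 z) Uz => [y'|] // _.
      move/leP: l1s => /(_ _ _ E); rewrite sz => -[ey]; subst y'.
      by move/leP: l1' ; apply; move/leP: l1; apply.
    case E: (f2 z) Uz => [y'|] // _.
    move/leP: l2s => /(_ _ _ E); rewrite sz => -[ey]; subst y'.
    by move/leP: l2' ; apply; move/leP: l2; apply.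
  + apply/leP => z y fz; apply/rfunE; split; first by left; rewrite /pdom /= fz.
    by move/leP: l1s; apply.
  + apply/leP => z y fz; apply/rfunE; split; first by right; rewrite /pdom /= fz.
    by move/leP: l2s; apply.
- split.
    by move=> f wf; apply: wb_le wf; apply: pI_refl.
  move=> u ub; apply/leP => z y sz.
  have [f [wf fz]] := h s z ltac:(by rewrite sz).
  case E: (f z) fz => [y'|] // _.
  move/leP: (wb_le pI_refl wf) => /(_ _ _ E); rewrite sz => -[ey]; subst y'.
  by move/leP: (ub f wf); apply.
Qed.


Lemma C_to_I : CondC -> CondI.
Proof.
move=> h s x sx.
have cB : closed (~` pdom s) by apply: open_closedC; case: (pfunP s).
have nBx : ~ cs_set (ClosedSet cB) x by move=> /=; apply.
have [A [wA nAx]] := h _ x nBx.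
have oA : open (~` cs_set A) by apply: closed_openC; apply: cs_closed.
exists (restr s oA); split; last first.
  case E: (s x) sx => [y|] // _.
  suff -> : restr s oA x = Some y by [].
  by apply/rfunE.
move=> D t dD sup les.
pose DC := fun C : closed_set X => exists2 d, D d & cs_set C = ~` pdom d.
have cd : forall d : pI X, closed (~` pdom d).
  by move=> d; apply: open_closedC; case: (pfunP d).
have dDC : directed (@closed_le X) DC.
  split.
    have [d Dd] := dD.1; by exists (ClosedSet (cd d)); exists d.
  move=> C1 C2 [d1 D1 e1] [d2 D2 e2].
  have [c [Dc [l1 l2]]] := dD.2 d1 d2 D1 D2.
  exists (ClosedSet (cd c)); split; first by exists c.
  split.
    rewrite /closed_le e1 /= => z nz pz; apply: nz.
    by case E: (d1 z) pz => [y|] // _; move/leP: l1 => /(_ _ _ E); rewrite /pdom /= => ->.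
  rewrite /closed_le e2 /= => z nz pz; apply: nz.
  by case E: (d2 z) pz => [y|] // _; move/leP: l2 => /(_ _ _ E); rewrite /pdom /= => ->.
have cS : closed (\bigcap_(C in DC) cs_set C).
  by apply: closed_bigI => C _; apply: cs_closed.
pose S := ClosedSet cS.
have sS : is_sup (@closed_le X) DC S.
  split; first by move=> C DCC z Sz; apply: Sz.
  by move=> u ub z uz C DCC; apply: (ub C DCC z uz).
have oV : open (\bigcup_(d in D) pdom d).
  by apply: bigcup_open => d _; case: (pfunP d).
have lBS : closed_le (ClosedSet cB) S.
  move=> z Sz /= pz.
  case E: (s z) pz => [y|] // _.
  have ub : forall d, D d -> pI_le d (restr t oV).
    move=> d Dd; apply/leP => w y' dw; apply/rfunE; split.
      by exists d => //; rewrite /pdom /= dw.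
    by move/leP: (sup.1 d Dd); apply.
  move/leP: (sup.2 _ ub) => /(_ z y).
  move/leP: les => /(_ z y E) tz /(_ tz) /rfunE [[d Dd pdz] _].
  have : DC (ClosedSet (cd d)) by exists d.
  by move=> /Sz.
have [C [[d Dd eC] lAC]] := wA DC S dDC sS lBS.
exists d; split=> //; apply/leP => z y /rfunE [nAz sz].
case E: (d z) => [y'|]; last first.
  by exfalso; apply: nAz; apply: lAC; rewrite eC /pdom /= E.
move/leP: les => /(_ _ _ sz); move/leP: (sup.1 d Dd) => /(_ _ _ E) -> [->] //.
Qed.

Lemma I_to_C : CondI -> CondC.
Proof.
move=> h B x nBx.
have oW : open (~` cs_set B) by apply: closed_openC; apply: cs_closed.
pose s := restr idI oW.
have sx : s x = Some x by apply/rfunE.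
have [f [wf fx]] := h s x ltac:(by rewrite sx).
have cA : closed (~` pdom f) by apply: open_closedC; case: (pfunP f).
exists (ClosedSet cA); split; last by move=> /=; apply.
move=> D S dD sup lBS.
have oC : forall d : closed_set X, open (~` cs_set d).
  by move=> d; apply: closed_openC; apply: cs_closed.
pose D' := fun g : pI X => exists2 d, D d & g = restr s (oC d).
have dD' : directed (@pI_le X) D'.
  split.
    have [d Dd] := dD.1; by exists (restr s (oC d)); exists d.
  move=> g1 g2 [d1 D1 ->] [d2 D2 ->].
  have [c [Dc [l1 l2]]] := dD.2 d1 d2 D1 D2.
  exists (restr s (oC c)); split; first by exists c.
  by split; apply/leP => z y /rfunE [nz sz]; apply/rfunE; split=> // cz;
    apply: nz; [apply: l1|apply: l2].
pose t := restr s (oC S).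
have sD' : is_sup (@pI_le X) D' t.
  split.
    move=> g [d Dd ->]; apply/leP => z y /rfunE [nz sz]; apply/rfunE; split=> //.
    by move=> Sz; apply: nz; apply: (sup.1 d Dd).
  move=> u ub; apply/leP => z y /rfunE [nSz sz].
  have [d Dd ndz] : exists2 d, D d & ~ cs_set d z.
    apply: contrapT => H.
    have cI : closed (\bigcap_(d in D) cs_set d).
      by apply: closed_bigI => d _; apply: cs_closed.
    have ubI : forall d, D d -> closed_le d (ClosedSet cI).
      by move=> d Dd w Iw; apply: Iw.
    apply: nSz; apply: (sup.2 _ ubI) => d Dd /=.
    by apply: contrapT => nd; apply: H; exists d.
  have : D' (restr s (oC d)) by exists d.
  move/ub/leP; apply; by apply/rfunE.
have lst : pI_le s t.
  apply/leP => z y sz; apply/rfunE; split=> //.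
  by move: sz => /rfunE [nBz _] /lBS.
have [g [[d Dd ->] lfg]] := wf D' t dD' sD' lst.
exists d; split=> // z dz /= pz.
case E: (f z) pz => [y|] // _.
by move/leP: lfg => /(_ _ _ E) /rfunE [].
Qed.

End Aux.

Theorem corollary5p10 (X : topologicalType) :
  core_compact X <-> pI_continuous X.
Proof.
rewrite cc_iff ci_iff; split; [exact: C_to_I | exact: I_to_C].
Qed.
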